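(* Consider the average-cost Markov decision process (MDP) described in the context, with finite state space $\mathcal{S}$ of TAoI values, action set $\mathcal{A}=\{(0,0),(0,1),(1,0),(1,1)\}$, per-step cost $\bar{R}(\Delta,\mathbf{a})=\Delta+\tfrac{1}{2}(L(\mathbf{a})-1)$ and transition probabilities $\bar{p}$. Let $(V^{*},V)$ solve the Bellman equation $$V^{*}+V(s)=\min_{\mathbf{a}\in\mathcal{A}}\Big\{\bar{R}(s,\mathbf{a})+\sum_{s'\in\mathcal{S}}\bar{p}(s'|s,\mathbf{a})V(s')\Big\},\quad \forall s\in\mathcal{S}.$$ Then the value function $V(\Delta)$ is non-decreasing in $\Delta\in\mathcal{S}$.
   Context: Parameters: positive integers $T_1^u<T_2^u$ (transmission latencies, in time slots, of a low- and high-resolution image) and $T_1^c<T_2^c$ (inference latencies of a small and a large language model); success probabilities $p_s,q_s,p_l,q_l\in(0,1]$ associated with actions $(0,0),(1,0),(0,1),(1,1)$ respectively (action $\mathbf{a}=(a^u,a^c)$: $a^u=0/1$ low/high resolution, $a^c=0/1$ small/large model). The duration of action $\mathbf{a}$ is $L((0,0))=T_1^u+T_1^c$, $L((1,0))=T_2^u+T_1^c$, $L((0,1))=T_1^u+T_2^c$, $L((1,1))=T_2^u+T_2^c$. Write $P(\mathbf{a})$ for the success probability of $\mathbf{a}$. The state (task-oriented age of information, TAoI) $\Delta$ takes values in a finite set $\mathcal{S}$ of positive integers bounded by a finite upper limit $\hat{\Delta}$. In the original semi-Markov model, from state $\Delta$ under action $\mathbf{a}$ the next state is $L(\mathbf{a})$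 with probability $P(\mathbf{a})$ and $\min\{\Delta+L(\mathbf{a}),\hat{\Delta}\}$ with probability $1-P(\mathbf{a})$; denote these probabilities $p(s'|s,\mathbf{a})$. The equivalent discrete-time MDP has the same state and action spaces, cost $\bar{R}(\Delta,\mathbf{a})=\Delta+\tfrac12(L(\mathbf{a})-1)$, and transition probabilities $\bar{p}(s'|s,\mathbf{a})=\frac{\epsilon}{L(\mathbf{a})}p(s'|s,\mathbf{a})$ for $s'\neq s$ and $\bar{p}(s|s,\mathbf{a})=1-\frac{\epsilon}{L(\mathbf{a})}\big(1-p(s|s,\mathbf{a})\big)$, where $\epsilon\in(0,\min_{\mathbf{a}}L(\mathbf{a})]$ is fixed. *)

(* Defs.v *)
From HB Require Import structures.
From mathcomp Require Import all_boot all_order all_algebra.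
Set Implicit Arguments. Unset Strict Implicit. Unset Printing Implicit Defensive.
Import Order.TTheory GRing.Theory Num.Theory.
Local Open Scope ring_scope.

(* An action a = (a^u, a^c) : bool * bool ; false = 0, true = 1. *)
Definition action := (bool * bool)%type.

Definition dur (T1u T2u T1c T2c : nat) (a : action) : nat :=
  ((if a.1 then T2u else T1u) + (if a.2 then T2c else T1c))%N.

Definition succ {R : pzRingType} (ps qs pl ql : R) (a : action) : R :=
  match a with
  | (false, false) => ps
  | (true, false) => qs
  | (false, true) => pl
  | (true, true) => ql
  end.

Definition ptrans {R : pzRingType} (Lf : action -> nat) (Pf : action -> R)
  (Dhat : nat) (s : nat) (a : action) (s' : nat) : R :=
  Pf a * (s' == Lf a)%:R + (1 - Pf a) * (s' == minn (s + Lf a) Dhat)%:R.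

(* Transition probability of the equivalent discrete-time MDP. *)
Definition pbar {R : fieldType} (eps : R) (Lf : action -> nat) (Pf : action -> R)
  (Dhat : nat) (s : nat) (a : action) (s' : nat) : R :=
  if s' != s then eps / (Lf a)%:R * ptrans Lf Pf Dhat s a s'
  else 1 - eps / (Lf a)%:R * (1 - ptrans Lf Pf Dhat s a s).

Definition Rbar {R : fieldType} (Lf : action -> nat) (s : nat) (a : action) : R :=
  s%:R + ((Lf a)%:R - 1) / 2%:R.

Definition Qval {R : fieldType} (eps : R) (Lf : action -> nat) (Pf : action -> R)
  (Dhat : nat) (S : seq nat) (V : nat -> R) (s : nat) (a : action) : R :=
  Rbar Lf s a + \sum_(s' <- S) pbar eps Lf Pf Dhat s a s' * V s'.

Definition bellman {R : realFieldType} (eps : R) (Lf : action -> nat) (Pf : action -> R)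
  (Dhat : nat) (S : seq nat) (Vstar : R) (V : nat -> R) : Prop :=
  forall s, s \in S ->
    Vstar + V s =
      Num.min (Num.min (Qval eps Lf Pf Dhat S V s (false, false))
                       (Qval eps Lf Pf Dhat S V s (false, true)))
              (Num.min (Qval eps Lf Pf Dhat S V s (true, false))
                       (Qval eps Lf Pf Dhat S V s (true, true))).

(* Main.v *)
Require Import Defs.
From HB Require Import structures.
From mathcomp Require Import all_boot all_order all_algebra.
From mathcomp Require Import ring lra.
Import Order.TTheory GRing.Theory Num.Theory.
Local Open Scope ring_scope.

Lemma sum1 (R : realFieldType) (S : seq nat) (x : nat) (F : nat -> R) :
  uniq S -> x \in S -> \sum_(s' <- S) (s' == x)%:R * F s' = F x.
Proof.
elim: S => [|y S IH] //= /andP [yS uS]; rewrite in_cons big_cons.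
case: (eqVneq y x) => [<- _|ne] /=.
  rewrite big1_seq ?mul1r ?addr0 // => z /andP [_ zS].
  case: (eqVneq z y) => [e|_]; last by rewrite mul0r.
  by rewrite -e zS in yS.
by move=> xS; rewrite mul0r add0r IH.
Qed.

Lemma sum_pbar (R : realFieldType) (eps : R) Lf Pf Dhat S (V : nat -> R) s a :
  uniq S -> s \in S -> Lf a \in S -> minn (s + Lf a) Dhat \in S ->
  \sum_(s' <- S) pbar eps Lf Pf Dhat s a s' * V s' =
  V s + eps / (Lf a)%:R * (Pf a * V (Lf a) + (1 - Pf a) * V (minn (s + Lf a) Dhat) - V s).
Proof.
move=> uS sS LS mS.
set c := eps / (Lf a)%:R.
have E : forall s', pbar eps Lf Pf Dhat s a s' * V s' =
   (s' == s)%:R * V s' + c * (Pf a * ((s' == Lf a)%:R * V s')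
      + (1 - Pf a) * ((s' == minn (s + Lf a) Dhat)%:R * V s') - (s' == s)%:R * V s').
  move=> s'; rewrite /pbar /ptrans -/c; case: (eqVneq s' s) => [->|ne] /=.
    rewrite ?eqxx /=; ring.
  by ring.
rewrite (eq_bigr _ (fun s' _ => E s')) big_split /= sum1 //.
rewrite -mulr_sumr sumrB big_split /= -!mulr_sumr !sum1 //.
Qed.

Lemma min4 (R : realFieldType) (x a b c d : R) :
  x = Num.min (Num.min a b) (Num.min c d) ->
  [/\ x <= a, x <= b, x <= c & x <= d] /\ (x = a \/ x = b \/ x = c \/ x = d).
Proof.
move=> ->; split.
  by split; rewrite !ge_min ?lexx ?orbT.
rewrite !minEle; case: ifP; case: ifP; case: ifP; tauto.
Qed.

Lemma exmax (T : eqType) (R : realFieldType) (xs : seq T) (f : T -> R) :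
  xs != [::] -> exists2 x, x \in xs & forall y, y \in xs -> f y <= f x.
Proof.
elim: xs => [|y xs IH] // _.
case: (eqVneq xs [::]) => [->|/IH [x xin xm]].
  by exists y; rewrite ?mem_seq1 // => z; rewrite mem_seq1 => /eqP ->.
case: (lerP (f y) (f x)) => h.
  exists x; first by rewrite in_cons xin orbT.
  by move=> z; rewrite in_cons => /orP [/eqP ->|/xm].
exists y; first by rewrite in_cons eqxx.
move=> z; rewrite in_cons => /orP [/eqP ->//|/xm hz].
by apply: le_trans hz (ltW h).
Qed.

Theorem lemma1 (R : realFieldType)
  (T1u T2u T1c T2c : nat) (ps qs pl ql : R) (Dhat : nat) (S : seq nat)
  (eps Vstar : R) (V : nat -> R) :
  (0 < T1u)%N -> (T1u < T2u)%N -> (0 < T1c)%N -> (T1c < T2c)%N ->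
  0 < ps <= 1 -> 0 < qs <= 1 -> 0 < pl <= 1 -> 0 < ql <= 1 ->
  uniq S ->
  (forall s, s \in S -> (0 < s <= Dhat)%N) ->
  (* S is closed under the transitions of the model *)
  (forall a, dur T1u T2u T1c T2c a \in S) ->
  (forall s a, s \in S -> minn (s + dur T1u T2u T1c T2c a) Dhat \in S) ->
  0 < eps -> (forall a, eps <= (dur T1u T2u T1c T2c a)%:R) ->
  bellman eps (dur T1u T2u T1c T2c) (succ ps qs pl ql) Dhat S Vstar V ->
  forall s t, s \in S -> t \in S -> (s <= t)%N -> V s <= V t.
Proof.
move=> h1 h2 h3 h4 hps hqs hpl hql uS hS LS mS he heL hB.
set L := dur T1u T2u T1c T2c in LS mS heL hB *.
set P := succ ps qs pl ql in hB *.
have Qeq : forall s a, s \in S -> Qval eps L P Dhat S V s a =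
    Rbar L s a + V s + eps / (L a)%:R *
      (P a * V (L a) + (1 - P a) * V (minn (s + L a) Dhat) - V s).
  by move=> s a sS; rewrite /Qval sum_pbar ?addrA //; apply: mS.
have Pa : forall a, 0 < P a <= 1.
  by case=> [[] []]; rewrite /P /=.
set xs := [seq (x, y) | x <- S, y <- S].
pose f (p : nat * nat) := if (p.1 <= p.2)%N then V p.1 - V p.2 else 0.
have xsn : xs != [::].
  apply/eqP => e.
  have := allpairs_f pair (LS (false, false)) (LS (false, false)).
  by rewrite -/xs e.
have [p0 p0in p0m] := @exmax _ _ xs f xsn.
case/allpairsP: p0in => [[s0 t0] /= [s0S t0S ep0]].
have Hmax : forall x y, x \in S -> y \in S -> (x <= y)%N -> V x - V y <= f p0.
  move=> x y xS yS xy; have := p0m (x, y).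
  rewrite /f /= xy; apply; exact: allpairs_f.
suff D0 : f p0 <= 0.
  move=> s t sS tS st; have := Hmax s t sS tS st; lra.
rewrite leNgt; apply/negP => Dpos.
have st0 : (s0 < t0)%N.
  move: Dpos; rewrite ep0 /f /=; case: ifP => [|]; last by rewrite ltxx.
  rewrite leq_eqVlt => /orP [/eqP ->|//]; by rewrite subrr ltxx.
have fD : f p0 = V s0 - V t0 by rewrite ep0 /f /= ltnW.
have [[q1 q2 q3 q4] _] := @min4 _ _ _ _ _ _ (hB s0 s0S).
have [_ ex] := @min4 _ _ _ _ _ _ (hB t0 t0S).
have hle : forall a, Vstar + V s0 <= Qval eps L P Dhat S V s0 a.
  by case=> [[] []].
have Key : forall a, Vstar + V t0 = Qval eps L P Dhat S V t0 a -> False.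
  move=> a eqa; have := hle a; rewrite !Qeq // in eqa * => hl.
  set c := eps / (L a)%:R in eqa hl.
  have cpos : 0 < c.
    by apply: divr_gt0 => //; apply: lt_le_trans he (heL a).
  have /andP [Pp P1] := Pa a.
  set X := V (minn (s0 + L a) Dhat) - V (minn (t0 + L a) Dhat).
  have XD : X <= V s0 - V t0.
    rewrite -fD /X.
    have mle : (minn (s0 + L a) Dhat <= minn (t0 + L a) Dhat)%N.
      by rewrite leq_min geq_minr andbT (leq_trans (geq_minl _ _)) // leq_add2r ltnW.
    case: (eqVneq (minn (s0 + L a) Dhat) (minn (t0 + L a) Dhat)) => [->|_].
      by rewrite subrr ltW.
    by apply: Hmax => //; apply: mS.
  have Rd : Rbar L s0 a - Rbar L t0 a < 0 :> R.
    by rewrite /Rbar opprD addrACA subrr addr0 subr_lt0 ltr_nat.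
  have k1 : (1 - P a) * X <= (1 - P a) * (V s0 - V t0).
    by apply: ler_wpM2l => //; rewrite subr_ge0.
  have k2 : c * ((1 - P a) * X - (V s0 - V t0)) <=
            c * ((1 - P a) * (V s0 - V t0) - (V s0 - V t0)).
    by apply: ler_wpM2l; [exact: ltW | rewrite lerD2r].
  have k3 : 0 < c * (P a * (V s0 - V t0)) by rewrite mulr_gt0 // mulr_gt0 // -fD.
  have k4 : c * ((1 - P a) * (V s0 - V t0) - (V s0 - V t0)) =
            - (c * (P a * (V s0 - V t0))) by ring.
  have k5 : Vstar + V s0 - (Vstar + V t0) <=
    (Rbar L s0 a + V s0 + c * (P a * V (L a) + (1 - P a) * V (minn (s0 + L a) Dhat) - V s0))
    - (Rbar L t0 a + V t0 + c * (P a * V (L a) + (1 - P a) * V (minn (t0 + L a) Dhat) - V t0)).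
    by rewrite -eqa lerD2r.
  have k6 : (Rbar L s0 a + V s0 + c * (P a * V (L a) + (1 - P a) * V (minn (s0 + L a) Dhat) - V s0))
    - (Rbar L t0 a + V t0 + c * (P a * V (L a) + (1 - P a) * V (minn (t0 + L a) Dhat) - V t0))
    = (Rbar L s0 a - Rbar L t0 a) + (V s0 - V t0) + c * ((1 - P a) * X - (V s0 - V t0)).
    rewrite /X; ring.
  lra.
by case: ex => [/Key|[/Key|[/Key|/Key]]].
Qed.
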